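(* Let $\mathcal{G}$ be a connected $k$-uniform hypergraph with $n$ vertices, and let $\Delta$ be the maximum degree of $\mathcal{G}$. Then $\mathcal{G}$ is a $2$-design if and only if $\alpha_1(\mathcal{G})=\cdots=\alpha_n(\mathcal{G})=\frac{\Delta(k-1)}{n-1}$.
   Context: A $k$-uniform hypergraph $\mathcal{G}$ has vertex set $V(\mathcal{G})=[n]$ and edge set $E(\mathcal{G})$ of $k$-element subsets of $V(\mathcal{G})$; the degree $d_i$ of vertex $i$ is the number of edges containing it. Connectedness: any two vertices are joined by a path $v_0e_1v_1\cdots e_lv_l$ (distinct vertices, distinct edges, $v_{i-1},v_i\in e_i$). A $2$-$(n,b,k,r,\lambda)$ design is regarded as a $k$-uniform $r$-regular hypergraph on $n$ vertices with $b$ edges such that every pair of distinct vertices $x,y$ lies in exactly $\lambda$ common edges; $\mathcal{G}$ is a $2$-design if it is such a design for some parameters. For $\mathbf{x}\in\mathbb{R}^n$, $\mathcal{L}_\mathcal{G}\mathbf{x}^k=\sum_{\{i_1,\ldots,i_k\}\in E(\mathcal{G})}\left(x_{i_1}^k+\cdots+x_{i_k}^k-k\,x_{i_1}\cdots x_{i_k}\right)$; the inverse Perron value of vertex $j$ is $\alpha_j(\mathcal{G})=\min\{\mathcal{L}_\mathcal{G}\mathbf{x}^k : \mathbf{x}\in\mathbb{R}^n_+,\ \sum_{i=1}^n x_i^k=1,\ x_j=0\}$. *)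

(* Defs.v *)
From HB Require Import structures.
From mathcomp Require Import all_boot all_order all_algebra.
From mathcomp Require Import reals.
Set Implicit Arguments. Unset Strict Implicit. Unset Printing Implicit Defensive.
Import Order.TTheory GRing.Theory Num.Theory.
Local Open Scope ring_scope.

Definition uniform (n k : nat) (E : {set {set 'I_n}}) : Prop :=
  forall e, e \in E -> #|e| = k.

Definition deg (n : nat) (E : {set {set 'I_n}}) (i : 'I_n) : nat :=
  #|[set e in E | i \in e]|.

Definition maxdeg (n : nat) (E : {set {set 'I_n}}) : nat :=
  (\max_(i < n) deg E i)%N.

(* A path x = v_0 e_1 v_1 ... e_l v_l = y : vs = [:: v_1; ...; v_l],
   es = [:: e_1; ...; e_l]; distinct vertices, distinct edges,
   v_{i-1}, v_i in e_i, e_i an edge. *)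
Definition hpath (n : nat) (E : {set {set 'I_n}}) (x y : 'I_n)
    (vs : seq 'I_n) (es : seq {set 'I_n}) : Prop :=
  [/\ size es = size vs, uniq (x :: vs), uniq es, last x vs = y &
      forall i, (i < size es)%N ->
        [/\ nth set0 es i \in E,
            nth x (x :: vs) i \in nth set0 es i &
            nth x (x :: vs) i.+1 \in nth set0 es i]].

Definition hconnected (n : nat) (E : {set {set 'I_n}}) : Prop :=
  forall x y : 'I_n, exists vs es, hpath E x y vs es.

Definition is_2design (n : nat) (E : {set {set 'I_n}}) : Prop :=
  exists r lam : nat,
    (forall i, deg E i = r) /\
    (forall x y : 'I_n, x != y -> #|[set e in E | (x \in e) && (y \in e)]| = lam).

Definition lapk (R : realType) (n k : nat) (E : {set {set 'I_n}})
    (x : 'I_n -> R) : R :=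
  \sum_(e in E) (\sum_(i in e) x i ^+ k - k%:R * \prod_(i in e) x i).

Definition feasible (R : realType) (n k : nat) (j : 'I_n) (x : 'I_n -> R) : Prop :=
  [/\ forall i, 0 <= x i, \sum_(i < n) x i ^+ k = 1 & x j = 0].

Definition is_alpha (R : realType) (n k : nat) (E : {set {set 'I_n}})
    (j : 'I_n) (a : R) : Prop :=
  (exists x, feasible k j x /\ lapk k E x = a) /\
  (forall x, feasible k j x -> a <= lapk k E x).

(* Main.v *)
Require Import Defs.
From HB Require Import structures.
From mathcomp Require Import all_boot all_order all_algebra.
From mathcomp Require Import reals.
From mathcomp Require Import ring lra.
Import Order.TTheory GRing.Theory Num.Theory.
Set Implicit Arguments. Unset Strict Implicit.
Local Open Scope ring_scope.

Lemma sum_ind (R : realType) n (A : {set 'I_n}) (j : 'I_n) :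
  \sum_(i in A) (i == j)%:R = (j \in A)%:R :> R.
Proof.
case: (boolP (j \in A)) => jA.
  rewrite (bigD1 j) //= eqxx big1 ?addr0 // => i /andP[_ /negbTE ->] //.
rewrite big1 // => i iA; case: eqP => // eij; subst; by rewrite iA in jA.
Qed.

Definition yv (R : realType) n (j a : 'I_n) (u : R) (i : 'I_n) : R :=
  if i == j then 0 else if i == a then u else 1.

Lemma yv_pow (R : realType) n (j a : 'I_n) (u : R) k i : a != j -> (0 < k)%N ->
  yv j a u i ^+ k = 1 - (i == j)%:R + (i == a)%:R * (u ^+ k - 1).
Proof.
move=> aj k0; rewrite /yv; case: (eqVneq i j) => [->|ij].
  by rewrite expr0n eqn0Ngt k0 /= eq_sym (negbTE aj) mul0r addr0 subrr.
case: ifP => ia /=; rewrite ?expr1n; ring.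
Qed.

Lemma edge_y (R : realType) n (j a : 'I_n) (u : R) k (e : {set 'I_n}) :
  a != j -> #|e| = k -> (0 < k)%N ->
  \sum_(i in e) yv j a u i ^+ k - k%:R * \prod_(i in e) yv j a u i =
  (j \in e)%:R * (k%:R - 1) + (a \in e)%:R * (u ^+ k - 1)
   - ((a \in e) && (j \notin e))%:R * (k%:R * (u - 1)).
Proof.
move=> aj ce k0.
rewrite (eq_bigr _ (fun i _ => yv_pow u i aj k0)) big_split sumrB /=.
rewrite -mulr_suml !sum_ind sumr_const ce.
case: (boolP (j \in e)) => je.
  rewrite (bigD1 j) //= {1}/yv eqxx mul0r mulr0 andbF /=; ring.
case: (boolP (a \in e)) => ae /=.
  rewrite (bigD1 a) //= {1}/yv eqxx (negbTE aj) big1 ?mulr1.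
    ring.
  move=> i /andP[ie ia]; rewrite /yv (negbTE ia).
  by case: eqP => // eij; subst; rewrite ie in je.
rewrite big1.
  ring.
move=> i ie; rewrite /yv.
case: eqP => eij; first by subst; rewrite ie in je.
by case: eqP => // eia; subst; rewrite ie in ae.
Qed.
Lemma kroot (R : realType) (k : nat) (z : R) : (0 < k)%N -> 0 <= z ->
  exists2 y : R, 0 <= y & y ^+ k = z.
Proof.
move=> k0 z0.
have le01z : (0:R) <= 1 + z by rewrite addr_ge0.
have H : ('X^k - z%:P).[0] <= 0 <= ('X^k - z%:P).[1 + z].
  rewrite !hornerE expr0n eqn0Ngt k0 /= sub0r oppr_le0 z0 /= subr_ge0.
  apply: le_trans (_ : 1 + z <= _); first by rewrite lerDr.
  by rewrite -[leLHS]expr1; apply: ler_weXn2l; rewrite ?lerDl.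
have [y /andP[y0 _]] := @poly_ivt R ('X^k - z%:P) 0 (1 + z) le01z H.
by rewrite rootE !hornerE subr_eq0 => /eqP yk; exists y.
Qed.
Lemma card_sum (R : realType) (n : nat) (E : {set {set 'I_n}}) (P : pred {set 'I_n}) :
  (#|[set e in E | P e]|)%:R = \sum_(e in E) (P e)%:R :> R.
Proof.
rewrite -sum1_card natr_sum big_mkcond [RHS]big_mkcond /=.
by apply: eq_bigr => e _; rewrite inE; case: (e \in E); case: (P e).
Qed.
Lemma lapk_scale (R : realType) n k (E : {set {set 'I_n}}) (t : R) x :
  uniform k E -> lapk k E (fun i => t * x i) = t ^+ k * lapk k E x.
Proof.
move=> uE; rewrite /lapk mulr_sumr; apply: eq_bigr => e eE.
rewrite mulrBr mulr_sumr big_split /= prodr_const (uE e eE).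
under eq_bigr do rewrite exprMn.
by rewrite mulrCA.
Qed.

Lemma amgm (R : realType) n (A : {set 'I_n}) k (x : 'I_n -> R) :
  #|A| = k -> (0 < k)%N -> (forall i, 0 <= x i) ->
  k%:R * \prod_(i in A) x i <= \sum_(i in A) x i ^+ k.
Proof.
move=> cA k0 x0.
have H := leif_AGM (A := mem A) (E := fun i => x i ^+ k) (fun i _ => exprn_ge0 k (x0 i)).
move: H.1; rewrite /= cA prodrXl.
rewrite ler_pXn2r ?nnegrE ?prodr_ge0 //; last first.
  by rewrite divr_ge0 ?sumr_ge0 // => i _; rewrite exprn_ge0.
have kp : (0:R) < k%:R by rewrite ltr0n.
by rewrite ler_pdivlMr // mulrC.
Qed.

Lemma bern_bound (R : realType) (k : nat) : exists C : R, 0 <= C /\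
  forall e : R, 0 <= e -> e <= 1 ->
   1 + k%:R * e <= (1 + e) ^+ k <= 1 + k%:R * e + C * e ^+ 2.
Proof.
elim: k => [|k [C [C0 IH]]].
  by exists 0; split => // e _ _; rewrite !mul0r !addr0 expr0 lexx.
exists (k%:R + 2 * C); split.
  by apply: addr_ge0; rewrite ?ler0n // mulr_ge0.
move=> e e0 e1; have /andP[h1 h2] := IH e e0 e1.
have k0 : (0:R) <= k%:R by rewrite ler0n.
rewrite exprS -natr1.
apply/andP; split; nra.
Qed.


Lemma sum_ind_all (R : realType) n (j : 'I_n) :
  \sum_(i < n) (i == j)%:R = 1 :> R.
Proof.
rewrite (bigD1 j) //= eqxx big1 ?addr0 // => i /negbTE -> //.
Qed.

Lemma sum_y (R : realType) n (j a : 'I_n) (u : R) k : a != j -> (0 < k)%N ->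
  \sum_(i < n) yv j a u i ^+ k = (n%:R - 1) + (u ^+ k - 1).
Proof.
move=> aj k0.
rewrite (eq_bigr _ (fun i _ => yv_pow u i aj k0)) big_split sumrB /=.
by rewrite -mulr_suml !sum_ind_all sumr_const card_ord mul1r.
Qed.

Lemma lapk_y (R : realType) n k (E : {set {set 'I_n}}) (j a : 'I_n) (u : R) :
  uniform k E -> a != j -> (0 < k)%N ->
  lapk k E (yv j a u) =
   (\sum_(e in E) (j \in e)%:R) * (k%:R - 1)
   + (\sum_(e in E) (a \in e)%:R) * (u ^+ k - 1)
   - (\sum_(e in E) ((a \in e) && (j \notin e))%:R) * (k%:R * (u - 1)).
Proof.
move=> uE aj k0; rewrite /lapk.
rewrite (eq_bigr _ (fun e eE => edge_y u aj (uE e eE) k0)).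
by rewrite sumrB big_split /= !mulr_suml.
Qed.

Lemma norm_y (R : realType) n k (E : {set {set 'I_n}}) (j a : 'I_n) (u : R) :
  uniform k E -> a != j -> (0 < k)%N -> 0 <= u ->
  0 < \sum_(i < n) yv j a u i ^+ k ->
  exists x, feasible k j x /\
    lapk k E x = lapk k E (yv j a u) / \sum_(i < n) yv j a u i ^+ k.
Proof.
move=> uE aj k0 u0 S0.
have Si : 0 < (\sum_(i < n) yv j a u i ^+ k)^-1 by rewrite invr_gt0.
have [t t0 tk] := kroot k0 (ltW Si).
have y0 i : 0 <= yv j a u i by rewrite /yv; case: ifP => _ //; case: ifP.
exists (fun i => t * yv j a u i); split; last first.
  by rewrite lapk_scale // tk mulrC.
split.
- by move=> i; rewrite mulr_ge0.
- under eq_bigr do rewrite exprMn.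
  by rewrite -mulr_sumr tk mulVf // gt_eqF.
- by rewrite /yv eqxx mulr0.
Qed.

Definition codeg (R : realType) n (E : {set {set 'I_n}}) (j a : 'I_n) : R :=
  \sum_(e in E) ((j \in e) && (a \in e))%:R.

Lemma codeg_sum (R : realType) n k (E : {set {set 'I_n}}) (j : 'I_n) :
  uniform k E ->
  \sum_(a < n) codeg R E j a = k%:R * \sum_(e in E) (j \in e)%:R.
Proof.
move=> uE; rewrite /codeg exchange_big /= mulr_sumr; apply: eq_bigr => e eE.
have -> : \sum_(a < n) ((j \in e) && (a \in e))%:R = (j \in e)%:R * \sum_(a < n) (a \in e)%:R :> R.
  by rewrite mulr_sumr; apply: eq_bigr => a _; case: (j \in e); rewrite ?mul1r ?mul0r.
rewrite mulrC; congr (_ * _).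
rewrite -(uE e eE) -sum1_card natr_sum [RHS]big_mkcond /=.
by apply: eq_bigr => a _; case: (a \in e).
Qed.

Lemma codeg_diag (R : realType) n (E : {set {set 'I_n}}) (j : 'I_n) :
  codeg R E j j = \sum_(e in E) (j \in e)%:R.
Proof. by apply: eq_bigr => e _; rewrite andbb. Qed.

Lemma m_eq (R : realType) n (E : {set {set 'I_n}}) (j a : 'I_n) :
  \sum_(e in E) ((a \in e) && (j \notin e))%:R =
  \sum_(e in E) (a \in e)%:R - codeg R E j a :> R.
Proof.
rewrite /codeg -sumrB; apply: eq_bigr => e _.
by case: (a \in e); case: (j \in e) => /=; rewrite ?subrr ?subr0.
Qed.

Lemma lapk_lb (R : realType) n k (E : {set {set 'I_n}}) (j : 'I_n) (x : 'I_n -> R) :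
  uniform k E -> (0 < k)%N -> feasible k j x ->
  \sum_(i < n) x i ^+ k * codeg R E j i <= lapk k E x.
Proof.
move=> uE k0 [x0 _ xj].
apply: le_trans (_ : \sum_(e in E) (j \in e)%:R * \sum_(i in e) x i ^+ k <= _).
  rewrite /codeg.
  under eq_bigr do rewrite mulr_sumr.
  rewrite exchange_big /=; apply: ler_sum => e eE.
  rewrite mulr_sumr [leRHS]big_mkcond /=; apply: ler_sum => i _.
  by case: (i \in e); case: (j \in e) => /=; rewrite ?mulr0 ?mul0r ?mulr1 ?mul1r.
apply: ler_sum => e eE.
case: (boolP (j \in e)) => je /=.
  by rewrite mul1r [\prod_(i in e) _](bigD1 j je) /= xj mul0r mulr0 subr0.
rewrite mulr0n mul0r subr_ge0; apply: amgm => //; exact: uE.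
Qed.

Lemma k_ge2 n k (E : {set {set 'I_n}}) :
  (2 <= n)%N -> uniform k E -> hconnected E -> (2 <= k)%N.
Proof.
move=> n2 uE hc.
have h0 : (0 < n)%N by apply: leq_trans n2.
pose x := Ordinal h0; pose y := Ordinal n2.
have xy : x != y by [].
have [vs [es [hs hu hue hl hi]]] := hc x y.
case: vs hs hu hl hi => [|v vs] hs hu hl hi.
  by rewrite /= in hl; rewrite hl eqxx in xy.
have := hi 0%N; rewrite hs /= => /(_ isT) [eE xe ve].
move: hu; rewrite /= inE negb_or => /andP[/andP[xv _] _].
rewrite -(uE _ eE); apply: leq_trans (_ : #|[set x; v]| <= _)%N; first by rewrite cards2 xv.
by apply: subset_leq_card; apply/subsetP => z; rewrite !inE => /orP[] /eqP ->.
Qed.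

Unset Implicit Arguments.

Theorem theorem3p8 (R : realType) (n k : nat) (E : {set {set 'I_n}}) :
  (2 <= n)%N -> uniform k E -> hconnected E ->
  (is_2design E <->
   forall j : 'I_n,
     is_alpha k E j ((maxdeg E)%:R * (k%:R - 1) / (n%:R - 1) : R)).
Proof.
move=> n2 uE hc.
have k2 := k_ge2 n2 uE hc.
have k0 : (0 < k)%N by apply: leq_trans k2.
have h0 : (0 < n)%N by apply: leq_trans n2.
pose o0 : 'I_n := Ordinal h0; pose o1 : 'I_n := Ordinal n2.
have o01 : o1 != o0 by [].
have exa (j : 'I_n) : exists a, a != j.
  case: (eqVneq j o0) => [->|jo]; first by exists o1.
  by exists o0; rewrite eq_sym.
have n1 : (0:R) < n%:R - 1.
  by rewrite subr_gt0 (ltr_nat R 1 n).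
have k1 : (0:R) < k%:R - 1.
  by rewrite subr_gt0 (ltr_nat R 1 k).
have degR (i : 'I_n) : (deg E i)%:R = \sum_(e in E) (i \in e)%:R :> R.
  by rewrite /deg (card_sum R E (fun e => i \in e)).
have up (j a : 'I_n) : a != j -> exists x, feasible k j x /\
    lapk k E x = (deg E j)%:R * (k%:R - 1) / (n%:R - 1) :> R.
  move=> aj.
  have S0 : (0:R) < \sum_(i < n) yv j a 1 i ^+ k.
    by rewrite sum_y // expr1n subrr addr0.
  have [x [fx lx]] := norm_y uE aj k0 ler01 S0.
  exists x; split => //; rewrite lx lapk_y // sum_y // expr1n !subrr addr0.
  by rewrite !mulr0 addr0 subr0 degR.
have clin (j : 'I_n) : \sum_(a < n) codeg R E j a = k%:R * (deg E j)%:R.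
  by rewrite (codeg_sum R j uE) degR.
split.
- move=> [r [lam [hr hl]]] j.
  have Dr : maxdeg E = r.
    apply/eqP; rewrite eqn_leq; apply/andP; split.
      by apply/bigmax_leqP => i _; rewrite hr.
    rewrite -(hr o0) /maxdeg; exact: leq_bigmax.
  have cg (a : 'I_n) : a != j -> codeg R E j a = lam%:R.
    by move=> aj; rewrite /codeg -(card_sum R E (fun e => (j \in e) && (a \in e))) hl // eq_sym.
  have key : (n%:R - 1) * lam%:R = (k%:R - 1) * r%:R :> R.
    have : \sum_(a < n) codeg R E j a =
           \sum_(a < n) (lam%:R + (a == j)%:R * (r%:R - lam%:R)) :> R.
      apply: eq_bigr => a _; case: (eqVneq a j) => [->|aj].
        by rewrite codeg_diag -degR hr /= mulr1n; ring.
      by rewrite cg // /= mulr0n; ring.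
    rewrite clin big_split /= sumr_const card_ord -mulr_suml sum_ind_all hr.
    rewrite -mulr_natl => h; nra.
  split.
    have [a aj] := exa j; have [x [fx lx]] := up j a aj.
    by exists x; split => //; rewrite lx hr Dr.
  move=> x fx; apply: le_trans (lapk_lb uE k0 fx).
  have -> : \sum_(i < n) x i ^+ k * codeg R E j i = lam%:R * \sum_(i < n) x i ^+ k.
    rewrite mulr_sumr; apply: eq_bigr => i _; case: (eqVneq i j) => [->|ij].
      by case: fx => _ _ ->; rewrite expr0n eqn0Ngt k0 /= !mul0r mulr0.
    by rewrite cg // mulrC.
  case: fx => _ -> _; rewrite mulr1 Dr ler_pdivrMr //; nra.
move=> H.
have regular (j : 'I_n) : deg E j = maxdeg E.
  have [a aj] := exa j; have [x [fx lx]] := up j a aj.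
  have := (H j).2 x fx; rewrite lx ler_pM2r ?invr_gt0 // ler_pM2r // ler_nat => h.
  apply/eqP; rewrite eqn_leq h andbT /maxdeg; exact: leq_bigmax.
pose r := maxdeg E.
pose c : R := r%:R * (k%:R - 1) / (n%:R - 1).
have cdef : c * (n%:R - 1) = r%:R * (k%:R - 1) by rewrite /c divfK // gt_eqF.
have c0 : 0 <= c by rewrite /c divr_ge0 ?mulr_ge0 ?ler0n // ltW.
have dR (j : 'I_n) : \sum_(e in E) (j \in e)%:R = r%:R :> R by rewrite -degR regular.
have lb (j a : 'I_n) : a != j -> c <= codeg R E j a.
  move=> aj; rewrite leNgt; apply/negP => glt.
  pose g := codeg R E j a.
  pose d := c - g.
  have d0 : 0 < d by rewrite /d subr_gt0.
  have [C [C0 hC]] := bern_bound R k.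
  pose den := C * r%:R + d + 1.
  have den0 : 0 < den.
    by rewrite /den addr_gt0 // ltr_pwDr // mulr_ge0 ?ler0n.
  pose eps := d / den.
  have epsd : eps * den = d by rewrite /eps divfK // gt_eqF.
  have eps0 : 0 < eps by rewrite /eps divr_gt0.
  have eps1 : eps <= 1.
    rewrite /eps ler_pdivrMr // mul1r /den.
    have : 0 <= C * r%:R by rewrite mulr_ge0 ?ler0n.
    lra.
  have /andP[hb1 hb2] := hC eps (ltW eps0) eps1.
  have u0 : (0:R) <= 1 + eps by rewrite addr_ge0 ?ltW.
  have S0 : (0:R) < \sum_(i < n) yv j a (1 + eps) i ^+ k.
    rewrite sum_y //.
    have : 0 <= k%:R * eps by rewrite mulr_ge0 ?ler0n ?ltW.
    lra.
  have [x [fx lx]] := norm_y uE aj k0 u0 S0.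
  have := (H j).2 x fx.
  rewrite lx ler_pdivlMr // lapk_y // sum_y // m_eq !dR -/r -/c -/g.
  have -> : 1 + eps - 1 = eps by rewrite addrC addKr.
  rewrite mulrDr cdef.
  move: hb1 hb2; set P := (1 + eps) ^+ k => hb1 hb2 h.
  have hk : (1:R) <= k%:R by rewrite ler1n.
  have hr0 : (0:R) <= r%:R by rewrite ler0n.
  have q0 : 0 <= c * (P - 1 - k%:R * eps).
    by apply: mulr_ge0 => //; lra.
  have q1 : r%:R * (P - 1 - k%:R * eps) <= r%:R * (C * eps ^+ 2).
    by apply: ler_wpM2l => //; lra.
  have key : d * k%:R * eps <= r%:R * C * eps ^+ 2.
    rewrite /d; nra.
  have e2 : eps * den * eps = d * eps by rewrite epsd.
  have p1 : 0 < (eps * d + eps) * eps.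
    by rewrite mulr_gt0 // addr_gt0 // mulr_gt0.
  have p2 : d * eps <= d * k%:R * eps.
    rewrite -mulrA ler_pM2l // -[leLHS]mul1r ler_pM2r //.
  move: e2; rewrite /den; nra.
have eqc (j a : 'I_n) : a != j -> codeg R E j a = c.
  move=> aj.
  pose F (b : 'I_n) := codeg R E j b - c - (b == j)%:R * (r%:R - c).
  have F0 b : 0 <= F b.
    rewrite /F; case: (eqVneq b j) => [->|bj].
      by rewrite codeg_diag dR /= mulr1n mul1r subrr.
    by rewrite /= mulr0n mul0r subr0 subr_ge0 lb.
  have hs : \sum_(b < n) F b = 0.
    rewrite /F !sumrB clin regular -/r sumr_const card_ord -mulr_suml sum_ind_all mul1r.
    rewrite -mulr_natl; move: cdef; lra.
  have := (psumr_eq0P (fun b _ => F0 b) hs) a isT.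
  rewrite /F (negbTE aj) /= mulr0n mul0r subr0 => /eqP; rewrite subr_eq0 => /eqP.
  done.
exists r, #|[set e in E | (o0 \in e) && (o1 \in e)]|; split => //.
move=> x y xy; apply/eqP; rewrite -(eqr_nat R).
rewrite !(card_sum R E (fun e => (_ \in e) && (_ \in e))) -/(codeg R E x y).
by rewrite -/(codeg R E o0 o1) !eqc // eq_sym.
Qed.
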